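(* Let $\mathbf{L}\in\{\mathbf{K}_D,\mathbf{KD}_D,\mathbf{KT}_D\}$. The cut rule is admissible in $\mathsf{G}(\mathbf{L})$: for all finite multisets $\Gamma,\Delta,\Gamma',\Delta'$ and every formula $\lambda$, if $\mathsf{G}(\mathbf{L})\vdash\Gamma\Rightarrow\Delta,\lambda$ and $\mathsf{G}(\mathbf{L})\vdash\lambda,\Gamma'\Rightarrow\Delta'$, then $\mathsf{G}(\mathbf{L})\vdash\Gamma,\Gamma'\Rightarrow\Delta,\Delta'$.
   Context: Language: fix a finite nonempty set $\mathsf{Agt}$ of agents and a countable set $\mathsf{Prop}$ of propositional variables; $\mathsf{Grp}$ is the set of nonempty subsets of $\mathsf{Agt}$. Formulas: $\alpha::=p\mid\bot\mid\alpha\wedge\alpha\mid\alpha\vee\alpha\mid\alpha\rightarrow\alpha\mid\neg\alpha\mid D_G\alpha$ ($p\in\mathsf{Prop}$, $G\in\mathsf{Grp}$). Outmost-boxed formula: one of the form $D_G\gamma$. Sequent calculi (sequents $\Gamma\Rightarrow\Delta$ are pairs of finite multisets; derivable = root of a finite tree built from initial sequents by rules): $\mathsf{G}(\mathbf{K}_D)$ has initial sequents $\Gamma,p\Rightarrow p,\Delta$ ($p\in\mathsf{Prop}$) and $\bot,\Gamma\Rightarrow\Delta$; rules $(R\wedge)$ from $\Gamma\Rightarrow\Delta,\alpha_1$ and $\Gamma\Rightarrow\Delta,\alpha_2$ infer $\Gamma\Rightarrow\Delta,\alpha_1\wedge\alpha_2$; $(L\wedge)$ from $\alpha_1,\alpha_2,\Gamma\Rightarrow\Delta$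 infer $\alpha_1\wedge\alpha_2,\Gamma\Rightarrow\Delta$; $(R\vee)$ from $\Gamma\Rightarrow\Delta,\alpha_1,\alpha_2$ infer $\Gamma\Rightarrow\Delta,\alpha_1\vee\alpha_2$; $(L\vee)$ from $\alpha_1,\Gamma\Rightarrow\Delta$ and $\alpha_2,\Gamma\Rightarrow\Delta$ infer $\alpha_1\vee\alpha_2,\Gamma\Rightarrow\Delta$; $(R\rightarrow)$ from $\alpha_1,\Gamma\Rightarrow\Delta,\alpha_2$ infer $\Gamma\Rightarrow\Delta,\alpha_1\rightarrow\alpha_2$; $(L\rightarrow)$ from $\Gamma\Rightarrow\Delta,\alpha_1$ and $\alpha_2,\Gamma\Rightarrow\Delta$ infer $\alpha_1\rightarrow\alpha_2,\Gamma\Rightarrow\Delta$; $(R\neg)$ from $\alpha,\Gamma\Rightarrow\Delta$ infer $\Gamma\Rightarrow\Delta,\neg\alpha$; $(L\neg)$ from $\Gamma\Rightarrow\Delta,\alpha$ infer $\neg\alpha,\Gamma\Rightarrow\Delta$; $(D_K)$: from $\alpha_1,\dots,\alpha_n\Rightarrow\beta$ ($n\ge0$) infer $\Sigma,D_{G_1}\alpha_1,\dots,D_{G_n}\alpha_n\Rightarrow D_G\beta,\Omega$ where all $G_i\subseteq G$, $\Sigma$ consists only of propositional variables, $\bot$, and $D_H\gamma$ with $H\not\subseteq G$, and $\Omega$ only of propositional variables, $\bot$, outmost-boxed formulas. $\mathsf{G}(\mathbf{KD}_D)$ adds $(D_D)$: from $\Gamma\Rightarrow$ with $\Gamma\neq\emptyset$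 infer $\Sigma,D_{\{a\}}\Gamma\Rightarrow\Omega$ ($a\in\mathsf{Agt}$, $D_{\{a\}}\Gamma=\{D_{\{a\}}\gamma:\gamma\in\Gamma\}$), $\Sigma$ only propositional variables, $\bot$, $D_H\gamma$ with $H\neq\{a\}$; $\Omega$ only propositional variables, $\bot$, outmost-boxed formulas. $\mathsf{G}(\mathbf{KT}_D)$ adds to $\mathsf{G}(\mathbf{K}_D)$ $(D_T)$: from $D_G\alpha,\alpha,\Gamma\Rightarrow\Delta$ infer $D_G\alpha,\Gamma\Rightarrow\Delta$. *)

(* Defs.v *)
From mathcomp Require Import all_boot.
From Stdlib Require Import List Permutation.
Set Implicit Arguments. Unset Strict Implicit. Unset Printing Implicit Defensive.

Definition grp (Agt : finType) := {G : {set Agt} | G != set0}.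

Inductive form (V : Type) (Agt : finType) : Type :=
| Var : V -> form V Agt
| Bot : form V Agt
| And : form V Agt -> form V Agt -> form V Agt
| Or  : form V Agt -> form V Agt -> form V Agt
| Imp : form V Agt -> form V Agt -> form V Agt
| Neg : form V Agt -> form V Agt
| Dbox : grp Agt -> form V Agt -> form V Agt.
Arguments Var {V Agt}. Arguments Bot {V Agt}. Arguments And {V Agt}. Arguments Or {V Agt}. Arguments Imp {V Agt}. Arguments Neg {V Agt}. Arguments Dbox {V Agt}.

Section Calculus.
Variables (V : Type) (Agt : finType).
Notation form := (form V Agt).

Definition sigmaK (G : grp Agt) (f : form) : Prop :=
  match f with
  | Var _ | Bot => True
  | Dbox H _ => ~~ (val H \subset val G)
  | _ => False
  end.
Definition sigmaD (a : Agt) (f : form) : Prop :=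
  match f with
  | Var _ | Bot => True
  | Dbox H _ => val H != [set a]
  | _ => False
  end.
Definition omegaOK (f : form) : Prop :=
  match f with
  | Var _ | Bot | Dbox _ _ => True
  | _ => False
  end.

Inductive logic := LK | LKD | LKT.

(* Sequents Gamma => Delta are pairs of finite multisets, represented as lists
   taken up to permutation (rule [d_perm]). *)
Inductive derivable (L : logic) : list form -> list form -> Prop :=
| d_perm Γ Δ Γ' Δ' : Permutation Γ Γ' -> Permutation Δ Δ' ->
    derivable L Γ Δ -> derivable L Γ' Δ'
| d_init p Γ Δ : derivable L (Var p :: Γ) (Var p :: Δ)
| d_bot Γ Δ : derivable L (Bot :: Γ) Δ
| d_Rand Γ Δ a1 a2 : derivable L Γ (a1 :: Δ) -> derivable L Γ (a2 :: Δ) ->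
    derivable L Γ (And a1 a2 :: Δ)
| d_Land Γ Δ a1 a2 : derivable L (a1 :: a2 :: Γ) Δ ->
    derivable L (And a1 a2 :: Γ) Δ
| d_Ror Γ Δ a1 a2 : derivable L Γ (a1 :: a2 :: Δ) ->
    derivable L Γ (Or a1 a2 :: Δ)
| d_Lor Γ Δ a1 a2 : derivable L (a1 :: Γ) Δ -> derivable L (a2 :: Γ) Δ ->
    derivable L (Or a1 a2 :: Γ) Δ
| d_Rimp Γ Δ a1 a2 : derivable L (a1 :: Γ) (a2 :: Δ) ->
    derivable L Γ (Imp a1 a2 :: Δ)
| d_Limp Γ Δ a1 a2 : derivable L Γ (a1 :: Δ) -> derivable L (a2 :: Γ) Δ ->
    derivable L (Imp a1 a2 :: Γ) Δ
| d_Rneg Γ Δ a : derivable L (a :: Γ) Δ -> derivable L Γ (Neg a :: Δ)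
| d_Lneg Γ Δ a : derivable L Γ (a :: Δ) -> derivable L (Neg a :: Γ) Δ
| d_DK (l : list (grp Agt * form)) (G : grp Agt) (b : form) (Σ Ω : list form) :
    derivable L (map snd l) [:: b] ->
    (forall Ha, In Ha l -> val Ha.1 \subset val G) ->
    (forall f, In f Σ -> sigmaK G f) ->
    (forall f, In f Ω -> omegaOK f) ->
    derivable L (Σ ++ map (fun Ha => Dbox Ha.1 Ha.2) l) (Dbox G b :: Ω)
| d_DD (a : Agt) (Ga : grp Agt) (Γ Σ Ω : list form) :
    L = LKD ->
    val Ga = [set a] ->
    Γ <> [::] ->
    derivable L Γ [::] ->
    (forall f, In f Σ -> sigmaD a f) ->
    (forall f, In f Ω -> omegaOK f) ->
    derivable L (Σ ++ map (Dbox Ga) Γ) Ω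
| d_DT (G : grp Agt) a Γ Δ :
    L = LKT ->
    derivable L (Dbox G a :: a :: Γ) Δ ->
    derivable L (Dbox G a :: Γ) Δ.

End Calculus.

(* Main.v *)
Require Import Defs.
From mathcomp Require Import all_boot.
From Stdlib Require Import List Permutation Lia.
Set Implicit Arguments. Unset Strict Implicit.
Local Open Scope seq_scope.

Section Cut.
Variables (V : countType) (Agt : finType) (L : logic).
Notation form := (form V Agt).
Notation der := (derivable L).
Implicit Types (Γ Δ X Y Σ Ω m : list form) (G H Ga : grp Agt) (A b g : form).
Notation Dp := (fun Ha : grp Agt * form => Dbox Ha.1 Ha.2).

Definition fdec (x y : form) : {x = y} + {x <> y}.
Proof. decide equality; apply: eq_comparable. Defined.

Lemma cnt_cons (y : form) (l : list form) x : count_occ fdec (y :: l) x = ((if fdec y x then 1 else 0) + count_occ fdec l x)%coq_nat.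
Proof. simpl. by case: (fdec y x). Qed.
Lemma cnt_nil x : count_occ fdec [::] x = 0. Proof. by []. Qed.
Lemma cnt_cat (l1 l2 : list form) x : count_occ fdec (l1 ++ l2) x = (count_occ fdec l1 x + count_occ fdec l2 x)%coq_nat.
Proof. elim: l1 => //= y l IH. rewrite IH. case: (fdec y x) => _; lia. Qed.
Lemma lmap_cat (T1 T2 : Type) (f : T1 -> T2) (l1 l2 : list T1) : List.map f (l1 ++ l2) = List.map f l1 ++ List.map f l2.
Proof. by elim: l1 => //= x l ->. Qed.

Lemma pc (l1 l2 : list form) x : Permutation l1 l2 -> count_occ fdec l1 x = count_occ fdec l2 x.
Proof. by move/(Permutation_count_occ fdec); apply. Qed.

Lemma lmap_cons (T1 T2 : Type) (f : T1 -> T2) (x : T1) (l : list T1) : List.map f (x :: l) = f x :: List.map f l.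
Proof. by []. Qed.

Ltac cfinish x :=
  repeat match goal with H : Permutation _ _ |- _ => move: (@pc _ _ x H); clear H end;
  rewrite ?cnt_cat ?cnt_cons ?cnt_nil ?cnt_cat ?cnt_cons ?cnt_cat ?cnt_cons ?cnt_cat ?cnt_cons ?cnt_nil; intros; lia.

Ltac prep :=
  repeat match goal with H : Permutation _ _ |- _ => revert H end;
  rewrite ?lmap_cat ?lmap_cons ?lmap_cat ?lmap_cons; cbn [fst snd cat]; intros.

Ltac psolve :=
  prep; apply (proj2 (Permutation_count_occ fdec _ _)); let x := fresh "x" in intro x; cfinish x.

Ltac csolve :=
  let x := fresh "x" in intro x; prep; cfinish x.


Lemma In_cat (T : Type) (x : T) (l1 l2 : list T) : In x (l1 ++ l2) <-> In x l1 \/ In x l2.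
Proof. elim: l1 => /= [|y l IH]; [tauto| rewrite IH; tauto]. Qed.

Lemma in_perm (x : form) (l : list form) : In x l -> exists m, Permutation l (x :: m).
Proof.
  elim: l => //= y l IH [->|H]; first by exists l.
  case: (IH H) => m Hm. exists (y :: m). psolve.
Qed.

Lemma perm_In (x : form) (l l' : list form) : Permutation l l' -> In x l -> In x l'.
Proof. exact: Permutation_in. Qed.

Lemma perm_cons_cons (x y : form) (l l' : list form) : Permutation (x :: l) (y :: l') ->
  (x = y /\ Permutation l l') \/ (x <> y /\ exists m, Permutation l (y :: m) /\ Permutation l' (x :: m)).
Proof.
  move=> H. case: (fdec x y) => [E|NE].
  - left; split => //; subst; exact: Permutation_cons_inv H.
  - right; split => //.
    have: In x (y :: l') by exact: (perm_In H (or_introl erefl)).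
    case => [E|Hx]; first by congruence.
    case: (in_perm Hx) => m Hm. exists m; split; last by [].
    psolve.
Qed.

Lemma perm_split (x : form) (l ys l0 : list form) : Permutation (x :: l) (ys ++ l0) -> ~ In x ys ->
  exists m, Permutation l (ys ++ m) /\ Permutation l0 (x :: m).
Proof.
  move=> H Hn. have: In x (ys ++ l0) by exact: (perm_In H (or_introl erefl)).
  case/In_cat => // Hx. case: (in_perm Hx) => m Hm. exists m; split; last by [].
  psolve.
Qed.

Lemma perm_extract (l1 l2 ys l0 : list form) : Permutation (l1 ++ l2) (ys ++ l0) ->
  (forall y : form, In y ys -> ~ In y l2) ->
  exists m, Permutation l1 (ys ++ m) /\ Permutation l0 (m ++ l2).
Proof.
  elim: ys l1 l0 => [|y ys IH] l1 l0 /= H Hn.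
  - exists l1; split => //. psolve.
  - have: In y (l1 ++ l2) by exact: (perm_In (Permutation_sym H) (or_introl erefl)).
    case/In_cat => [Hy|Hy]; last by case: (Hn y (or_introl erefl)).
    case: (in_perm Hy) => l1' Hl1.
    have H2 : Permutation (l1' ++ l2) (ys ++ l0) by psolve.
    case: (IH _ _ H2 (fun z hz => Hn z (or_intror hz))) => m [Hm1 Hm2].
    exists m; split => //. psolve.
Qed.


Lemma dP (Γ Δ Γ' Δ' : list form) : Permutation Γ Γ' -> Permutation Δ Δ' -> der Γ Δ -> der Γ' Δ'.
Proof. move=> h1 h2 H; exact: d_perm h1 h2 H. Qed.

Ltac pto G D := apply: (@dP G D); [psolve | psolve | ].

Lemma init_gen p Γ Δ : In (Var p) Γ -> In (Var p) Δ -> der Γ Δ.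
Proof. move=> /in_perm[m1 H1] /in_perm[m2 H2]. apply: (dP _ _ (d_init L p m1 m2)); psolve. Qed.

Lemma bot_gen Γ Δ : In Bot Γ -> der Γ Δ.
Proof. move=> /in_perm[m1 H1]. apply: (dP _ _ (d_bot L m1 Δ)); psolve. Qed.

Lemma wkL_atom A : omegaOK A ->
  (forall H g, A = Dbox H g -> forall Γ Δ, der Γ Δ -> der (g :: Γ) Δ) ->
  forall Γ Δ, der Γ Δ -> der (A :: Γ) Δ.
Proof.
  move=> HA IHg Γ Δ D; elim: D => {Γ Δ}.
  - move=> Γ Δ Γ' Δ' h1 h2 _ IH. by pto (A :: Γ) Δ.
  - move=> p Γ Δ. apply: init_gen; simpl; tauto.
  - move=> Γ Δ. apply: bot_gen; simpl; tauto.
  - move=> Γ Δ a1 a2 _ IH1 _ IH2. exact: d_Rand.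
  - move=> Γ Δ a1 a2 _ IH. pto (And a1 a2 :: A :: Γ) Δ; apply: d_Land; by pto (A :: a1 :: a2 :: Γ) Δ.
  - move=> Γ Δ a1 a2 _ IH. exact: d_Ror.
  - move=> Γ Δ a1 a2 _ IH1 _ IH2. pto (Or a1 a2 :: A :: Γ) Δ; apply: d_Lor; [by pto (A :: a1 :: Γ) Δ | by pto (A :: a2 :: Γ) Δ].
  - move=> Γ Δ a1 a2 _ IH. apply: d_Rimp; by pto (A :: a1 :: Γ) (a2 :: Δ).
  - move=> Γ Δ a1 a2 _ IH1 _ IH2. pto (Imp a1 a2 :: A :: Γ) Δ; apply: d_Limp; [done | by pto (A :: a2 :: Γ) Δ].
  - move=> Γ Δ a _ IH. apply: d_Rneg; by pto (A :: a :: Γ) Δ.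
  - move=> Γ Δ a _ IH. pto (Neg a :: A :: Γ) Δ; exact: d_Lneg.
  - move=> l G b Σ Ω Hp _ Hl HΣ HΩ.
    case: A HA IHg => [p| |? ?|? ?|? ?|?|H g] // _ IHg.
    + pto ((Var p :: Σ) ++ map Dp l) (Dbox G b :: Ω); apply d_DK; try done; move=> f /= [<-|]; [done | exact: HΣ].
    + pto ((Bot :: Σ) ++ map Dp l) (Dbox G b :: Ω); apply d_DK; try done; move=> f /= [<-|]; [done | exact: HΣ].
    + case: (boolP (val H \subset val G)) => HG.
      * pto (Σ ++ map Dp ((H, g) :: l)) (Dbox G b :: Ω); apply d_DK; try done.
        -- exact: (IHg H g erefl _ _ Hp).
        -- move=> Ha /= [<-|]; [done | exact: Hl].
      * pto ((Dbox H g :: Σ) ++ map Dp l) (Dbox G b :: Ω); apply d_DK; try done; move=> f /= [<-|]; [done | exact: HΣ].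
  - move=> a Ga Γ Σ Ω HL Ha Hne Hp _ HΣ HΩ.
    case: A HA IHg => [p| |? ?|? ?|? ?|?|H g] // _ IHg.
    + pto ((Var p :: Σ) ++ map (Dbox Ga) Γ) Ω; apply (d_DD (a:=a)); try done; move=> f /= [<-|]; [done | exact: HΣ].
    + pto ((Bot :: Σ) ++ map (Dbox Ga) Γ) Ω; apply (d_DD (a:=a)); try done; move=> f /= [<-|]; [done | exact: HΣ].
    + case: (eqVneq H Ga) => HG.
      * subst H. pto (Σ ++ map (Dbox Ga) (g :: Γ)) Ω; apply (d_DD (a:=a)); try done.
        exact: (IHg Ga g erefl _ _ Hp).
      * pto ((Dbox H g :: Σ) ++ map (Dbox Ga) Γ) Ω; apply (d_DD (a:=a)); try done; move=> f /= [<-|]; last exact: HΣ.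
        apply/eqP => E; move/eqP: HG; apply; apply: val_inj; by rewrite E Ha.
  - move=> G a Γ Δ HL _ IH. pto (Dbox G a :: A :: Γ) Δ; apply: d_DT => //; by pto (A :: Dbox G a :: a :: Γ) Δ.
Qed.

Lemma wkR_atom A : omegaOK A -> forall Γ Δ, der Γ Δ -> der Γ (A :: Δ).
Proof.
  move=> HA Γ Δ D; elim: D => {Γ Δ}.
  - move=> Γ Δ Γ' Δ' h1 h2 _ IH. by pto Γ (A :: Δ).
  - move=> p Γ Δ. apply: init_gen; simpl; tauto.
  - move=> Γ Δ. apply: bot_gen; simpl; tauto.
  - move=> Γ Δ a1 a2 _ IH1 _ IH2. pto Γ (And a1 a2 :: A :: Δ); apply: d_Rand; [by pto Γ (A :: a1 :: Δ) | by pto Γ (A :: a2 :: Δ)].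
  - move=> Γ Δ a1 a2 _ IH. exact: d_Land.
  - move=> Γ Δ a1 a2 _ IH. pto Γ (Or a1 a2 :: A :: Δ); apply: d_Ror; by pto Γ (A :: a1 :: a2 :: Δ).
  - move=> Γ Δ a1 a2 _ IH1 _ IH2. exact: d_Lor.
  - move=> Γ Δ a1 a2 _ IH. pto Γ (Imp a1 a2 :: A :: Δ); apply: d_Rimp; by pto (a1 :: Γ) (A :: a2 :: Δ).
  - move=> Γ Δ a1 a2 _ IH1 _ IH2. apply: d_Limp; [by pto Γ (A :: a1 :: Δ) | done].
  - move=> Γ Δ a _ IH. pto Γ (Neg a :: A :: Δ); exact: d_Rneg.
  - move=> Γ Δ a _ IH. apply: d_Lneg; by pto Γ (A :: a :: Δ).
  - move=> l G b Σ Ω Hp IHp Hl HΣ HΩ.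
    pto (Σ ++ map Dp l) (Dbox G b :: A :: Ω); apply d_DK; try done; move=> f /= [<-|]; [done | exact: HΩ].
  - move=> a Ga Γ Σ Ω HL Ha Hne Hp IHp HΣ HΩ.
    apply (d_DD (a:=a)); try done; move=> f /= [<-|]; [done | exact: HΩ].
  - move=> G a Γ Δ HL _ IH. exact: d_DT.
Qed.

Lemma wk A : (forall Γ Δ, der Γ Δ -> der (A :: Γ) Δ) /\ (forall Γ Δ, der Γ Δ -> der Γ (A :: Δ)).
Proof.
  elim: A => [p| |a [IHa1 IHa2] b [IHb1 IHb2]|a [IHa1 IHa2] b [IHb1 IHb2]|a [IHa1 IHa2] b [IHb1 IHb2]|a [IHa1 IHa2]|H g [IHg1 IHg2]].
  - split; [apply: wkL_atom => // ? ? [] | exact: wkR_atom].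
  - split; [move=> Γ Δ _; exact: d_bot | exact: wkR_atom].
  - split=> Γ Δ D; [apply: d_Land; exact: IHa1 (IHb1 _ _ D) | apply: d_Rand; [exact: IHa2 | exact: IHb2]].
  - split=> Γ Δ D; [apply: d_Lor; [exact: IHa1 | exact: IHb1] | apply: d_Ror; exact: IHa2 (IHb2 _ _ D)].
  - split=> Γ Δ D; [apply: d_Limp; [exact: IHa2 | exact: IHb1] | apply: d_Rimp; exact: IHa1 (IHb2 _ _ D)].
  - split=> Γ Δ D; [apply: d_Lneg; exact: IHa2 | apply: d_Rneg; exact: IHa1].
  - split; [apply: wkL_atom => // ? ? [_ <-]; exact: IHg1 | exact: wkR_atom].
Qed.

Lemma wkLs X Γ Δ : der Γ Δ -> der (X ++ Γ) Δ.
Proof. elim: X => //= x X IH D. exact: (proj1 (wk x)) (IH D). Qed.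
Lemma wkRs Y Γ Δ : der Γ Δ -> der Γ (Y ++ Δ).
Proof. elim: Y => //= x X IH D. exact: (proj2 (wk x)) (IH D). Qed.

Lemma le_ex (Γ Γ' : list form) : (forall x, count_occ fdec Γ x <= count_occ fdec Γ' x)%coq_nat ->
  exists X, Permutation Γ' (X ++ Γ).
Proof.
  elim: Γ Γ' => [|y Γ IH] Γ' H; first by exists Γ'; rewrite cats0.
  have Hy: In y Γ'.
  { apply/(count_occ_In fdec). move: (H y). rewrite cnt_cons. case: (fdec y y) => //= _; lia. }
  case: (in_perm Hy) => m Hm.
  have H2 : (forall x, count_occ fdec Γ x <= count_occ fdec m x)%coq_nat.
  { move=> x; move: (H x); rewrite (pc x Hm) !cnt_cons; lia. }
  case: (IH _ H2) => X HX. exists X. psolve.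
Qed.

Lemma wk_le (Γ Δ Γ' Δ' : list form) : der Γ Δ -> (forall x, count_occ fdec Γ x <= count_occ fdec Γ' x)%coq_nat ->
  (forall x, count_occ fdec Δ x <= count_occ fdec Δ' x)%coq_nat -> der Γ' Δ'.
Proof.
  move=> D /le_ex [X HX] /le_ex [Y HY].
  apply: (dP (Permutation_sym HX) (Permutation_sym HY)). exact: wkLs (wkRs _ D).
Qed.

Ltac wto G D := apply: (@wk_le G D); try csolve.


Lemma om_DK G Σ (l : list (grp Agt * form)) A : (forall f, In f Σ -> sigmaK G f) -> In A (Σ ++ map Dp l) -> omegaOK A.
Proof.
  move=> HΣ /In_cat [/HΣ|/in_map_iff [x [<- _]]] //. by case: A.
Qed.

Lemma om_DD a Ga Σ Γ A : (forall f, In f Σ -> sigmaD a f) -> In A (Σ ++ map (Dbox Ga) Γ) -> omegaOK A.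
Proof.
  move=> HΣ /In_cat [/HΣ|/in_map_iff [x [<- _]]] //. by case: A.
Qed.

Lemma om_Om G b Ω A : (forall f, In f Ω -> omegaOK f) -> In A (Dbox G b :: Ω) -> omegaOK A.
Proof. move=> HΩ /= [<-|/HΩ] //. Qed.

Lemma inA x Γ A Γ0 : Permutation (x :: Γ) (A :: Γ0) -> x <> A -> In x Γ0.
Proof. move=> HP NE. case: (perm_In HP (or_introl erefl)) => // E. by case: NE. Qed.

Lemma HPin A Γ Γ0 : Permutation Γ (A :: Γ0) -> In A Γ.
Proof. move=> HP. exact: (perm_In (Permutation_sym HP) (or_introl erefl)). Qed.

Lemma invL_gen A Γa Δa : ~ omegaOK A ->
  (forall a1 a2 Γ Δ, A = And a1 a2 -> der (a1 :: a2 :: Γ) Δ -> der (Γa ++ Γ) (Δa ++ Δ)) ->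
  (forall a1 a2 Γ Δ, A = Or a1 a2 -> der (a1 :: Γ) Δ -> der (a2 :: Γ) Δ -> der (Γa ++ Γ) (Δa ++ Δ)) ->
  (forall a1 a2 Γ Δ, A = Imp a1 a2 -> der Γ (a1 :: Δ) -> der (a2 :: Γ) Δ -> der (Γa ++ Γ) (Δa ++ Δ)) ->
  (forall a Γ Δ, A = Neg a -> der Γ (a :: Δ) -> der (Γa ++ Γ) (Δa ++ Δ)) ->
  forall Γ Δ, der Γ Δ -> forall Γ0, Permutation Γ (A :: Γ0) -> der (Γa ++ Γ0) (Δa ++ Δ).
Proof.
  move=> HA Hand Hor Himp Hneg Γ Δ D; elim: D => {Γ Δ}.
  - move=> Γ Δ Γ' Δ' h1 h2 _ IH Γ0 HP.
    move: (IH Γ0 (Permutation_trans h1 HP)) => D. by pto (Γa ++ Γ0) (Δa ++ Δ).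
  - move=> p Γ Δ Γ0 HP. apply: (init_gen (p := p)); apply/In_cat; right; last by left.
    apply: inA HP _ => E. by apply: HA; rewrite -E.
  - move=> Γ Δ Γ0 HP. apply: bot_gen; apply/In_cat; right.
    apply: inA HP _ => E. by apply: HA; rewrite -E.
  - move=> Γ Δ a1 a2 _ IH1 _ IH2 Γ0 HP. move: (IH1 _ HP) (IH2 _ HP) => D1 D2.
    pto (Γa ++ Γ0) (And a1 a2 :: Δa ++ Δ); apply d_Rand; [by pto (Γa ++ Γ0) (Δa ++ a1 :: Δ) | by pto (Γa ++ Γ0) (Δa ++ a2 :: Δ)].
  - move=> Γ Δ a1 a2 D0 IH Γ0 HP. case: (perm_cons_cons HP) => [[E HP']|[NE [m [Hm1 Hm2]]]].
    + apply: (Hand a1 a2 Γ0 Δ (esym E)). by pto (a1 :: a2 :: Γ) Δ.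
    + move: (IH (a1 :: a2 :: m) ltac:(psolve)) => D1.
      pto (And a1 a2 :: Γa ++ m) (Δa ++ Δ); apply d_Land; by pto (Γa ++ a1 :: a2 :: m) (Δa ++ Δ).
  - move=> Γ Δ a1 a2 _ IH Γ0 HP. move: (IH _ HP) => D1.
    pto (Γa ++ Γ0) (Or a1 a2 :: Δa ++ Δ); apply d_Ror; by pto (Γa ++ Γ0) (Δa ++ a1 :: a2 :: Δ).
  - move=> Γ Δ a1 a2 D1 IH1 D2 IH2 Γ0 HP. case: (perm_cons_cons HP) => [[E HP']|[NE [m [Hm1 Hm2]]]].
    + apply: (Hor a1 a2 Γ0 Δ (esym E)); [by pto (a1 :: Γ) Δ | by pto (a2 :: Γ) Δ].
    + move: (IH1 (a1 :: m) ltac:(psolve)) (IH2 (a2 :: m) ltac:(psolve)) => E1 E2.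
      pto (Or a1 a2 :: Γa ++ m) (Δa ++ Δ); apply d_Lor; [by pto (Γa ++ a1 :: m) (Δa ++ Δ) | by pto (Γa ++ a2 :: m) (Δa ++ Δ)].
  - move=> Γ Δ a1 a2 _ IH Γ0 HP. move: (IH (a1 :: Γ0) ltac:(psolve)) => D1.
    pto (Γa ++ Γ0) (Imp a1 a2 :: Δa ++ Δ); apply d_Rimp; by pto (Γa ++ a1 :: Γ0) (Δa ++ a2 :: Δ).
  - move=> Γ Δ a1 a2 D1 IH1 D2 IH2 Γ0 HP. case: (perm_cons_cons HP) => [[E HP']|[NE [m [Hm1 Hm2]]]].
    + apply: (Himp a1 a2 Γ0 Δ (esym E)); [by pto Γ (a1 :: Δ) | by pto (a2 :: Γ) Δ].
    + move: (IH1 m Hm1) (IH2 (a2 :: m) ltac:(psolve)) => E1 E2.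
      pto (Imp a1 a2 :: Γa ++ m) (Δa ++ Δ); apply d_Limp; [by pto (Γa ++ m) (Δa ++ a1 :: Δ) | by pto (Γa ++ a2 :: m) (Δa ++ Δ)].
  - move=> Γ Δ a _ IH Γ0 HP. move: (IH (a :: Γ0) ltac:(psolve)) => D1.
    pto (Γa ++ Γ0) (Neg a :: Δa ++ Δ); apply d_Rneg; by pto (Γa ++ a :: Γ0) (Δa ++ Δ).
  - move=> Γ Δ a D1 IH Γ0 HP. case: (perm_cons_cons HP) => [[E HP']|[NE [m [Hm1 Hm2]]]].
    + apply: (Hneg a Γ0 Δ (esym E)). by pto Γ (a :: Δ).
    + move: (IH m Hm1) => E1.
      pto (Neg a :: Γa ++ m) (Δa ++ Δ); apply d_Lneg; by pto (Γa ++ m) (Δa ++ a :: Δ).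
  - move=> l G b Σ Ω _ _ Hl HΣ HΩ Γ0 HP. exfalso; apply: HA; exact: (om_DK HΣ (HPin HP)).
  - move=> a Ga Γ Σ Ω HL Ha Hne _ _ HΣ HΩ Γ0 HP. exfalso; apply: HA; exact: (om_DD HΣ (HPin HP)).
  - move=> G a Γ Δ HL _ IH Γ0 HP. case: (perm_cons_cons HP) => [[E _]|[NE [m [Hm1 Hm2]]]].
    + by exfalso; apply: HA; rewrite -E.
    + move: (IH (Dbox G a :: a :: m) ltac:(psolve)) => D1.
      pto (Dbox G a :: Γa ++ m) (Δa ++ Δ); apply d_DT => //; by pto (Γa ++ Dbox G a :: a :: m) (Δa ++ Δ).
Qed.

Lemma invR_gen A Γa Δa : ~ omegaOK A ->
  (forall a1 a2 Γ Δ, A = And a1 a2 -> der Γ (a1 :: Δ) -> der Γ (a2 :: Δ) -> der (Γa ++ Γ) (Δa ++ Δ)) ->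
  (forall a1 a2 Γ Δ, A = Or a1 a2 -> der Γ (a1 :: a2 :: Δ) -> der (Γa ++ Γ) (Δa ++ Δ)) ->
  (forall a1 a2 Γ Δ, A = Imp a1 a2 -> der (a1 :: Γ) (a2 :: Δ) -> der (Γa ++ Γ) (Δa ++ Δ)) ->
  (forall a Γ Δ, A = Neg a -> der (a :: Γ) Δ -> der (Γa ++ Γ) (Δa ++ Δ)) ->
  forall Γ Δ, der Γ Δ -> forall Δ0, Permutation Δ (A :: Δ0) -> der (Γa ++ Γ) (Δa ++ Δ0).
Proof.
  move=> HA Hand Hor Himp Hneg Γ Δ D; elim: D => {Γ Δ}.
  - move=> Γ Δ Γ' Δ' h1 h2 _ IH Δ0 HP.
    move: (IH Δ0 (Permutation_trans h2 HP)) => D. by pto (Γa ++ Γ) (Δa ++ Δ0).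
  - move=> p Γ Δ Δ0 HP. apply: (init_gen (p := p)); apply/In_cat; right; first by left.
    apply: inA HP _ => E. by apply: HA; rewrite -E.
  - move=> Γ Δ Δ0 HP. apply: bot_gen; apply/In_cat; right; by left.
  - move=> Γ Δ a1 a2 D1 IH1 D2 IH2 Δ0 HP. case: (perm_cons_cons HP) => [[E HP']|[NE [m [Hm1 Hm2]]]].
    + apply: (Hand a1 a2 Γ Δ0 (esym E)); [by pto Γ (a1 :: Δ) | by pto Γ (a2 :: Δ)].
    + move: (IH1 (a1 :: m) ltac:(psolve)) (IH2 (a2 :: m) ltac:(psolve)) => E1 E2.
      pto (Γa ++ Γ) (And a1 a2 :: Δa ++ m); apply d_Rand; [by pto (Γa ++ Γ) (Δa ++ a1 :: m) | by pto (Γa ++ Γ) (Δa ++ a2 :: m)].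
  - move=> Γ Δ a1 a2 _ IH Δ0 HP. move: (IH _ HP) => D1.
    pto (And a1 a2 :: Γa ++ Γ) (Δa ++ Δ0); apply d_Land; by pto (Γa ++ a1 :: a2 :: Γ) (Δa ++ Δ0).
  - move=> Γ Δ a1 a2 D1 IH Δ0 HP. case: (perm_cons_cons HP) => [[E HP']|[NE [m [Hm1 Hm2]]]].
    + apply: (Hor a1 a2 Γ Δ0 (esym E)). by pto Γ (a1 :: a2 :: Δ).
    + move: (IH (a1 :: a2 :: m) ltac:(psolve)) => E1.
      pto (Γa ++ Γ) (Or a1 a2 :: Δa ++ m); apply d_Ror; by pto (Γa ++ Γ) (Δa ++ a1 :: a2 :: m).
  - move=> Γ Δ a1 a2 _ IH1 _ IH2 Δ0 HP. move: (IH1 _ HP) (IH2 _ HP) => E1 E2.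
    pto (Or a1 a2 :: Γa ++ Γ) (Δa ++ Δ0); apply d_Lor; [by pto (Γa ++ a1 :: Γ) (Δa ++ Δ0) | by pto (Γa ++ a2 :: Γ) (Δa ++ Δ0)].
  - move=> Γ Δ a1 a2 D1 IH Δ0 HP. case: (perm_cons_cons HP) => [[E HP']|[NE [m [Hm1 Hm2]]]].
    + apply: (Himp a1 a2 Γ Δ0 (esym E)). by pto (a1 :: Γ) (a2 :: Δ).
    + move: (IH (a2 :: m) ltac:(psolve)) => E1.
      pto (Γa ++ Γ) (Imp a1 a2 :: Δa ++ m); apply d_Rimp; by pto (Γa ++ a1 :: Γ) (Δa ++ a2 :: m).
  - move=> Γ Δ a1 a2 _ IH1 _ IH2 Δ0 HP. move: (IH1 (a1 :: Δ0) ltac:(psolve)) (IH2 _ HP) => E1 E2.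
    pto (Imp a1 a2 :: Γa ++ Γ) (Δa ++ Δ0); apply d_Limp; [by pto (Γa ++ Γ) (Δa ++ a1 :: Δ0) | by pto (Γa ++ a2 :: Γ) (Δa ++ Δ0)].
  - move=> Γ Δ a D1 IH Δ0 HP. case: (perm_cons_cons HP) => [[E HP']|[NE [m [Hm1 Hm2]]]].
    + apply: (Hneg a Γ Δ0 (esym E)). by pto (a :: Γ) Δ.
    + move: (IH m Hm1) => E1.
      pto (Γa ++ Γ) (Neg a :: Δa ++ m); apply d_Rneg; by pto (Γa ++ a :: Γ) (Δa ++ m).
  - move=> Γ Δ a _ IH Δ0 HP. move: (IH (a :: Δ0) ltac:(psolve)) => E1.
    pto (Neg a :: Γa ++ Γ) (Δa ++ Δ0); apply d_Lneg; by pto (Γa ++ Γ) (Δa ++ a :: Δ0).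
  - move=> l G b Σ Ω _ _ Hl HΣ HΩ Δ0 HP. exfalso; apply: HA; exact: (om_Om HΩ (HPin HP)).
  - move=> a Ga Γ Σ Ω HL Ha Hne _ _ HΣ HΩ Δ0 HP. exfalso; apply: HA; exact: (HΩ _ (HPin HP)).
  - move=> G a Γ Δ HL _ IH Δ0 HP. move: (IH _ HP) => E1.
    pto (Dbox G a :: Γa ++ Γ) (Δa ++ Δ0); apply d_DT => //; by pto (Γa ++ Dbox G a :: a :: Γ) (Δa ++ Δ0).
Qed.

Ltac disc := let h := fresh in move=> ? ? ? ? h; discriminate h.
Ltac disc3 := let h := fresh in move=> ? ? ? h; discriminate h.

Lemma invL_and a b Γ Δ : der (And a b :: Γ) Δ -> der (a :: b :: Γ) Δ.
Proof.
  move=> D; apply: (invL_gen (A := And a b) (Γa := [:: a; b]) (Δa := [::]) _ _ _ _ _ D) => //.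
  all: first [by move=> ? ? ? ? [<- <-] | by move=> ? ? ? [<-] | disc | disc3].
Qed.
Lemma invL_or1 a b Γ Δ : der (Or a b :: Γ) Δ -> der (a :: Γ) Δ.
Proof.
  move=> D; apply: (invL_gen (A := Or a b) (Γa := [:: a]) (Δa := [::]) _ _ _ _ _ D) => //.
  all: first [by move=> ? ? ? ? [<- <-] | by move=> ? ? ? [<-] | disc | disc3].
Qed.
Lemma invL_or2 a b Γ Δ : der (Or a b :: Γ) Δ -> der (b :: Γ) Δ.
Proof.
  move=> D; apply: (invL_gen (A := Or a b) (Γa := [:: b]) (Δa := [::]) _ _ _ _ _ D) => //.
  all: first [by move=> ? ? ? ? [<- <-] | by move=> ? ? ? [<-] | disc | disc3].
Qed.
Lemma invL_imp1 a b Γ Δ : der (Imp a b :: Γ) Δ -> der Γ (a :: Δ).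
Proof.
  move=> D; apply: (invL_gen (A := Imp a b) (Γa := [::]) (Δa := [:: a]) _ _ _ _ _ D) => //.
  all: first [by move=> ? ? ? ? [<- <-] | by move=> ? ? ? [<-] | disc | disc3].
Qed.
Lemma invL_imp2 a b Γ Δ : der (Imp a b :: Γ) Δ -> der (b :: Γ) Δ.
Proof.
  move=> D; apply: (invL_gen (A := Imp a b) (Γa := [:: b]) (Δa := [::]) _ _ _ _ _ D) => //.
  all: first [by move=> ? ? ? ? [<- <-] | by move=> ? ? ? [<-] | disc | disc3].
Qed.
Lemma invL_neg a Γ Δ : der (Neg a :: Γ) Δ -> der Γ (a :: Δ).
Proof.
  move=> D; apply: (invL_gen (A := Neg a) (Γa := [::]) (Δa := [:: a]) _ _ _ _ _ D) => //.
  all: first [by move=> ? ? ? ? [<- <-] | by move=> ? ? ? [<-] | disc | disc3].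
Qed.
Lemma invR_and1 a b Γ Δ : der Γ (And a b :: Δ) -> der Γ (a :: Δ).
Proof.
  move=> D; apply: (invR_gen (A := And a b) (Γa := [::]) (Δa := [:: a]) _ _ _ _ _ D) => //.
  all: first [by move=> ? ? ? ? [<- <-] | by move=> ? ? ? [<-] | disc | disc3].
Qed.
Lemma invR_and2 a b Γ Δ : der Γ (And a b :: Δ) -> der Γ (b :: Δ).
Proof.
  move=> D; apply: (invR_gen (A := And a b) (Γa := [::]) (Δa := [:: b]) _ _ _ _ _ D) => //.
  all: first [by move=> ? ? ? ? [<- <-] | by move=> ? ? ? [<-] | disc | disc3].
Qed.
Lemma invR_or a b Γ Δ : der Γ (Or a b :: Δ) -> der Γ (a :: b :: Δ).
Proof.
  move=> D; apply: (invR_gen (A := Or a b) (Γa := [::]) (Δa := [:: a; b]) _ _ _ _ _ D) => //.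
  all: first [by move=> ? ? ? ? [<- <-] | by move=> ? ? ? [<-] | disc | disc3].
Qed.
Lemma invR_imp a b Γ Δ : der Γ (Imp a b :: Δ) -> der (a :: Γ) (b :: Δ).
Proof.
  move=> D; apply: (invR_gen (A := Imp a b) (Γa := [:: a]) (Δa := [:: b]) _ _ _ _ _ D) => //.
  all: first [by move=> ? ? ? ? [<- <-] | by move=> ? ? ? [<-] | disc | disc3].
Qed.
Lemma invR_neg a Γ Δ : der Γ (Neg a :: Δ) -> der (a :: Γ) Δ.
Proof.
  move=> D; apply: (invR_gen (A := Neg a) (Γa := [:: a]) (Δa := [::]) _ _ _ _ _ D) => //.
  all: first [by move=> ? ? ? ? [<- <-] | by move=> ? ? ? [<-] | disc | disc3].
Qed.


Lemma nin2 (x A : form) : ~ omegaOK x -> omegaOK A -> ~ In x [:: A; A].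
Proof. move=> hx hA /= [E|[E|[]]]; by apply: hx; rewrite -E. Qed.

Lemma in2 (f A : form) Δ0 : In f (A :: Δ0) -> In f (A :: A :: Δ0).
Proof. move=> /= [->|H]; tauto. Qed.

Lemma in2' (f A : form) Δ0 : In f (A :: A :: Δ0) -> In f (A :: Δ0).
Proof. move=> /= [->|[->|H]]; tauto. Qed.

Lemma permIn_l f Σ ys m : Permutation Σ (ys ++ m) -> In f ys -> In f Σ.
Proof. move=> H Hf. apply: (perm_In (Permutation_sym H)). apply/In_cat; tauto. Qed.
Lemma permIn_r f Σ ys m : Permutation Σ (ys ++ m) -> In f m -> In f Σ.
Proof. move=> H Hf. apply: (perm_In (Permutation_sym H)). apply/In_cat; tauto. Qed.

Lemma ctr_DK_S A (l : list (grp Agt * form)) G b Σ Ω Γ0 : der (map snd l) [:: b] ->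
  (forall Ha, In Ha l -> val Ha.1 \subset val G) -> (forall f, In f Σ -> sigmaK G f) ->
  (forall f, In f Ω -> omegaOK f) -> ~ In A (map Dp l) ->
  Permutation (Σ ++ map Dp l) (A :: A :: Γ0) -> der (A :: Γ0) (Dbox G b :: Ω).
Proof.
  move=> Hp Hl HΣ HΩ HnA HP.
  case: (perm_extract (ys := [:: A; A]) HP) => [y /= [<-|[<-|[]]] //|m [Hm1 Hm2]].
  pto ((A :: m) ++ map Dp l) (Dbox G b :: Ω); apply d_DK; try done.
  move=> f /= [<-|Hf]; apply: HΣ; [apply: (permIn_l Hm1) | apply: (permIn_r Hm1)] => /=; tauto.
Qed.

Lemma ctr_DK_l H g (l : list (grp Agt * form)) G b Σ Ω Γ0 :
  (forall Γ Δ, der (g :: g :: Γ) Δ -> der (g :: Γ) Δ) ->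
  der (map snd l) [:: b] ->
  (forall Ha, In Ha l -> val Ha.1 \subset val G) -> (forall f, In f Σ -> sigmaK G f) ->
  (forall f, In f Ω -> omegaOK f) -> ~ In (Dbox H g) Σ ->
  Permutation (Σ ++ map Dp l) (Dbox H g :: Dbox H g :: Γ0) -> der (Dbox H g :: Γ0) (Dbox G b :: Ω).
Proof.
  move=> IHg Hp Hl HΣ HΩ HnA HP.
  have HP' : Permutation (map Dp l ++ Σ) ([:: Dbox H g; Dbox H g] ++ Γ0) by psolve.
  case: (perm_extract HP') => [y /= [<-|[<-|[]]] //|m [Hm1 Hm2]].
  case: (Permutation_map_inv _ _ (Permutation_sym Hm1)) => l3 [E Hl3].
  case: l3 E Hl3 => [|[H1 g1] [|[H2 g2] l4]] //= [<- <- <- <- Em] Hl3. subst m.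
  have Hp' : der (g :: g :: map snd l4) [:: b].
  { apply: (dP _ _ Hp); last by []. exact: (Permutation_map snd Hl3). }
  move: (IHg _ _ Hp') => Hp2.
  have Hl4 : forall Ha, In Ha ((H, g) :: l4) -> val Ha.1 \subset val G.
  { move=> Ha Hin; apply: Hl; apply: (Permutation_in _ (Permutation_sym Hl3)). move: Hin => /= [<-|]; tauto. }
  pto (Σ ++ map Dp ((H, g) :: l4)) (Dbox G b :: Ω). by apply d_DK.
Qed.

Lemma ctr_DD_S A a Ga Γd Σ Ω Γ0 : L = LKD -> val Ga = [set a] -> Γd <> [::] -> der Γd [::] ->
  (forall f, In f Σ -> sigmaD a f) ->
  (forall f, In f Ω -> omegaOK f) -> ~ In A (map (Dbox Ga) Γd) ->
  Permutation (Σ ++ map (Dbox Ga) Γd) (A :: A :: Γ0) -> der (A :: Γ0) Ω.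
Proof.
  move=> HL Ha Hne Hp HΣ HΩ HnA HP.
  case: (perm_extract (ys := [:: A; A]) HP) => [y /= [<-|[<-|[]]] //|m [Hm1 Hm2]].
  pto ((A :: m) ++ map (Dbox Ga) Γd) Ω; apply (d_DD (a:=a)); try done.
  move=> f /= [<-|Hf]; apply: HΣ; [apply: (permIn_l Hm1) | apply: (permIn_r Hm1)] => /=; tauto.
Qed.

Lemma ctr_DD_l g a Ga Γd Σ Ω Γ0 :
  (forall Γ Δ, der (g :: g :: Γ) Δ -> der (g :: Γ) Δ) ->
  L = LKD -> val Ga = [set a] -> der Γd [::] ->
  (forall f, In f Σ -> sigmaD a f) ->
  (forall f, In f Ω -> omegaOK f) -> ~ In (Dbox Ga g) Σ ->
  Permutation (Σ ++ map (Dbox Ga) Γd) (Dbox Ga g :: Dbox Ga g :: Γ0) -> der (Dbox Ga g :: Γ0) Ω.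
Proof.
  move=> IHg HL Ha Hp HΣ HΩ HnA HP.
  have HP' : Permutation (map (Dbox Ga) Γd ++ Σ) ([:: Dbox Ga g; Dbox Ga g] ++ Γ0) by psolve.
  case: (perm_extract HP') => [y /= [<-|[<-|[]]] //|m [Hm1 Hm2]].
  case: (Permutation_map_inv _ _ (Permutation_sym Hm1)) => l3 [E Hl3].
  case: l3 E Hl3 => [|g1 [|g2 l4]] //= [<- <- Em] Hl3. subst m.
  have Hp' : der (g :: g :: l4) [::] by apply: (dP Hl3 _ Hp).
  move: (IHg _ _ Hp') => Hp2.
  pto (Σ ++ map (Dbox Ga) (g :: l4)) Ω. by apply (d_DD (a:=a)).
Qed.

Lemma ctrL_atom A : omegaOK A ->
  (forall H g, A = Dbox H g -> forall Γ Δ, der (g :: g :: Γ) Δ -> der (g :: Γ) Δ) ->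
  forall Γ Δ, der Γ Δ -> forall Γ0, Permutation Γ (A :: A :: Γ0) -> der (A :: Γ0) Δ.
Proof.
  move=> HA IHg Γ Δ D; elim: D => {Γ Δ}.
  - move=> Γ Δ Γ' Δ' h1 h2 _ IH Γ0 HP.
    move: (IH Γ0 (Permutation_trans h1 HP)) => D. by pto (A :: Γ0) Δ.
  - move=> p Γ Δ Γ0 HP. apply: (init_gen (p := p)); last by left.
    apply: in2'. exact: (perm_In HP (or_introl erefl)).
  - move=> Γ Δ Γ0 HP. apply: bot_gen. apply: in2'. exact: (perm_In HP (or_introl erefl)).
  - move=> Γ Δ a1 a2 _ IH1 _ IH2 Γ0 HP. apply: d_Rand; [exact: IH1 | exact: IH2].
  - move=> Γ Δ a1 a2 _ IH Γ0 HP.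
    case: (perm_split (ys := [:: A; A]) HP (nin2 (x := And a1 a2) _ HA)) => // m [Hm1 Hm2].
    move: (IH (a1 :: a2 :: m) ltac:(psolve)) => D1.
    pto (And a1 a2 :: A :: m) Δ; apply d_Land; by pto (A :: a1 :: a2 :: m) Δ.
  - move=> Γ Δ a1 a2 _ IH Γ0 HP. apply: d_Ror; exact: IH.
  - move=> Γ Δ a1 a2 _ IH1 _ IH2 Γ0 HP.
    case: (perm_split (ys := [:: A; A]) HP (nin2 (x := Or a1 a2) _ HA)) => // m [Hm1 Hm2].
    move: (IH1 (a1 :: m) ltac:(psolve)) (IH2 (a2 :: m) ltac:(psolve)) => D1 D2.
    pto (Or a1 a2 :: A :: m) Δ; apply d_Lor; [by pto (A :: a1 :: m) Δ | by pto (A :: a2 :: m) Δ].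
  - move=> Γ Δ a1 a2 _ IH Γ0 HP. move: (IH (a1 :: Γ0) ltac:(psolve)) => D1.
    apply: d_Rimp; by pto (A :: a1 :: Γ0) (a2 :: Δ).
  - move=> Γ Δ a1 a2 _ IH1 _ IH2 Γ0 HP.
    case: (perm_split (ys := [:: A; A]) HP (nin2 (x := Imp a1 a2) _ HA)) => // m [Hm1 Hm2].
    move: (IH1 m Hm1) (IH2 (a2 :: m) ltac:(psolve)) => D1 D2.
    pto (Imp a1 a2 :: A :: m) Δ; apply d_Limp; [done | by pto (A :: a2 :: m) Δ].
  - move=> Γ Δ a _ IH Γ0 HP. move: (IH (a :: Γ0) ltac:(psolve)) => D1.
    apply: d_Rneg; by pto (A :: a :: Γ0) Δ.
  - move=> Γ Δ a _ IH Γ0 HP.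
    case: (perm_split (ys := [:: A; A]) HP (nin2 (x := Neg a) _ HA)) => // m [Hm1 Hm2].
    move: (IH m Hm1) => D1.
    pto (Neg a :: A :: m) Δ; by apply d_Lneg.
  - move=> l G b Σ Ω Hp _ Hl HΣ HΩ Γ0 HP.
    case: A HA IHg HP => [p| |? ?|? ?|? ?|?|H g] // _ IHg HP.
    + apply: ctr_DK_S HP => //. by move=> /in_map_iff [x [E _]].
    + apply: ctr_DK_S HP => //. by move=> /in_map_iff [x [E _]].
    + case: (boolP (val H \subset val G)) => HG.
      * apply: ctr_DK_l HP => //; first exact: IHg.
        move=> /HΣ /=. by rewrite HG.
      * apply: ctr_DK_S HP => //. move=> /in_map_iff [[H1 g1] [[E1 E2] Hin]].
        move: (Hl _ Hin) => /=. rewrite E1. by move: HG => /negP.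
  - move=> a Ga Γd Σ Ω HL Ha Hne Hp _ HΣ HΩ Γ0 HP.
    case: A HA IHg HP => [p| |? ?|? ?|? ?|?|H g] // _ IHg HP.
    + apply: (ctr_DD_S HL Ha Hne) HP => //. by move=> /in_map_iff [x [E _]].
    + apply: (ctr_DD_S HL Ha Hne) HP => //. by move=> /in_map_iff [x [E _]].
    + case: (eqVneq H Ga) => HG.
      * subst H. apply: (ctr_DD_l _ HL Ha) HP => //; first exact: IHg.
        move=> /HΣ /=. by rewrite Ha eqxx.
      * apply: (ctr_DD_S HL Ha Hne) HP => //. move=> /in_map_iff [x [[E1 _] _]].
        by rewrite E1 eqxx in HG.
  - move=> G a Γ Δ HL _ IH Γ0 HP.
    case: (fdec (Dbox G a) A) => [E|NE].
    + rewrite E in HP. move: (Permutation_cons_inv HP) => HP'.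
      move: (IH (a :: Γ0)); rewrite E => IH'. move: (IH' ltac:(psolve)) => D1.
      rewrite -E in D1 *. exact: d_DT.
    + have Hn : ~ In (Dbox G a) [:: A; A] by move=> /= [E|[E|[]]]; apply: NE.
      case: (perm_split (ys := [:: A; A]) HP Hn) => m [Hm1 Hm2].
      move: (IH (Dbox G a :: a :: m) ltac:(psolve)) => D1.
      pto (Dbox G a :: A :: m) Δ; apply d_DT => //; by pto (A :: Dbox G a :: a :: m) Δ.
Qed.

Lemma ctrR_atom A : omegaOK A ->
  forall Γ Δ, der Γ Δ -> forall Δ0, Permutation Δ (A :: A :: Δ0) -> der Γ (A :: Δ0).
Proof.
  move=> HA Γ Δ D; elim: D => {Γ Δ}.
  - move=> Γ Δ Γ' Δ' h1 h2 _ IH Δ0 HP.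
    move: (IH Δ0 (Permutation_trans h2 HP)) => D. by pto Γ (A :: Δ0).
  - move=> p Γ Δ Δ0 HP. apply: (init_gen (p := p)); first by left.
    apply: in2'. exact: (perm_In HP (or_introl erefl)).
  - move=> Γ Δ Δ0 HP. apply: bot_gen. by left.
  - move=> Γ Δ a1 a2 _ IH1 _ IH2 Δ0 HP.
    case: (perm_split (ys := [:: A; A]) HP (nin2 (x := And a1 a2) _ HA)) => // m [Hm1 Hm2].
    move: (IH1 (a1 :: m) ltac:(psolve)) (IH2 (a2 :: m) ltac:(psolve)) => D1 D2.
    pto Γ (And a1 a2 :: A :: m); apply d_Rand; [by pto Γ (A :: a1 :: m) | by pto Γ (A :: a2 :: m)].
  - move=> Γ Δ a1 a2 _ IH Δ0 HP. apply: d_Land; exact: IH.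
  - move=> Γ Δ a1 a2 _ IH Δ0 HP.
    case: (perm_split (ys := [:: A; A]) HP (nin2 (x := Or a1 a2) _ HA)) => // m [Hm1 Hm2].
    move: (IH (a1 :: a2 :: m) ltac:(psolve)) => D1.
    pto Γ (Or a1 a2 :: A :: m); apply d_Ror; by pto Γ (A :: a1 :: a2 :: m).
  - move=> Γ Δ a1 a2 _ IH1 _ IH2 Δ0 HP. apply: d_Lor; [exact: IH1 | exact: IH2].
  - move=> Γ Δ a1 a2 _ IH Δ0 HP.
    case: (perm_split (ys := [:: A; A]) HP (nin2 (x := Imp a1 a2) _ HA)) => // m [Hm1 Hm2].
    move: (IH (a2 :: m) ltac:(psolve)) => D1.
    pto Γ (Imp a1 a2 :: A :: m); apply d_Rimp; by pto (a1 :: Γ) (A :: a2 :: m).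
  - move=> Γ Δ a1 a2 _ IH1 _ IH2 Δ0 HP. move: (IH1 (a1 :: Δ0) ltac:(psolve)) (IH2 _ HP) => D1 D2.
    apply: d_Limp; [by pto Γ (A :: a1 :: Δ0) | done].
  - move=> Γ Δ a _ IH Δ0 HP.
    case: (perm_split (ys := [:: A; A]) HP (nin2 (x := Neg a) _ HA)) => // m [Hm1 Hm2].
    move: (IH m Hm1) => D1.
    pto Γ (Neg a :: A :: m); by apply d_Rneg.
  - move=> Γ Δ a _ IH Δ0 HP. move: (IH (a :: Δ0) ltac:(psolve)) => D1.
    apply: d_Lneg; by pto Γ (A :: a :: Δ0).
  - move=> l G b Σ Ω Hp _ Hl HΣ HΩ Δ0 HP.
    have Hin : In (Dbox G b) (A :: Δ0) by apply: in2'; exact: (perm_In HP (or_introl erefl)).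
    case: (in_perm Hin) => Ω' HΩ'.
    pto (Σ ++ map Dp l) (Dbox G b :: Ω'); apply d_DK; try done.
    move=> f Hf. apply: (om_Om HΩ). apply: (perm_In (Permutation_sym HP)). apply: in2.
    apply: (perm_In (Permutation_sym HΩ')). by right.
  - move=> a Ga Γd Σ Ω HL Ha Hne Hp _ HΣ HΩ Δ0 HP.
    apply (d_DD (a:=a)); try done.
    move=> f Hf. apply: HΩ. apply: (perm_In (Permutation_sym HP)). exact: in2.
  - move=> G a Γ Δ HL _ IH Δ0 HP. apply: d_DT => //; exact: IH.
Qed.

Definition cL A := forall Γ Δ, der (A :: A :: Γ) Δ -> der (A :: Γ) Δ.
Definition cR A := forall Γ Δ, der Γ (A :: A :: Δ) -> der Γ (A :: Δ).

Lemma cLp A Γ0 Γ Δ : cL A -> Permutation Γ (A :: A :: Γ0) -> der Γ Δ -> der (A :: Γ0) Δ.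
Proof. move=> H HP D. apply: H. exact: (dP HP (Permutation_refl _) D). Qed.
Lemma cRp A Δ0 Γ Δ : cR A -> Permutation Δ (A :: A :: Δ0) -> der Γ Δ -> der Γ (A :: Δ0).
Proof. move=> H HP D. apply: H. exact: (dP (Permutation_refl _) HP D). Qed.

Lemma ctr A : cL A /\ cR A.
Proof.
  elim: A => [p| |a [La Ra] b [Lb Rb]|a [La Ra] b [Lb Rb]|a [La Ra] b [Lb Rb]|a [La Ra]|H g [Lg Rg]].
  - split => Γ Δ D; [apply: (ctrL_atom _ _ D (Permutation_refl _)) => // ? ? [] | exact: (ctrR_atom _ D (Permutation_refl _))].
  - split => Γ Δ D; [exact: d_bot | exact: (ctrR_atom _ D (Permutation_refl _))].
  - split => Γ Δ D.
    + apply: d_Land. move/invL_and: D => D.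
      have D2 : der (And a b :: a :: b :: Γ) Δ by pto (a :: b :: And a b :: Γ) Δ.
      move/invL_and: D2 => D2.
      pto (b :: a :: Γ) Δ. apply: (cLp (Γ0 := a :: Γ) Lb _ (cLp (Γ0 := b :: b :: Γ) La _ D2)); psolve.
    + apply: d_Rand.
      * move/invR_and1: D => D. have D2 : der Γ (And a b :: a :: Δ) by pto Γ (a :: And a b :: Δ).
        move/invR_and1: D2 => D2. exact: Ra.
      * move/invR_and2: D => D. have D2 : der Γ (And a b :: b :: Δ) by pto Γ (b :: And a b :: Δ).
        move/invR_and2: D2 => D2. exact: Rb.
  - split => Γ Δ D.
    + apply: d_Lor.
      * move/invL_or1: D => D. have D2 : der (Or a b :: a :: Γ) Δ by pto (a :: Or a b :: Γ) Δ.
        move/invL_or1: D2 => D2. exact: La.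
      * move/invL_or2: D => D. have D2 : der (Or a b :: b :: Γ) Δ by pto (b :: Or a b :: Γ) Δ.
        move/invL_or2: D2 => D2. exact: Lb.
    + apply: d_Ror. move/invR_or: D => D.
      have D2 : der Γ (Or a b :: a :: b :: Δ) by pto Γ (a :: b :: Or a b :: Δ).
      move/invR_or: D2 => D2.
      pto Γ (b :: a :: Δ). apply: (cRp (Δ0 := a :: Δ) Rb _ (cRp (Δ0 := b :: b :: Δ) Ra _ D2)); psolve.
  - split => Γ Δ D.
    + apply: d_Limp.
      * move/invL_imp1: D => D. move/invL_imp1: D => D. exact: Ra.
      * move/invL_imp2: D => D. have D2 : der (Imp a b :: b :: Γ) Δ by pto (b :: Imp a b :: Γ) Δ.
        move/invL_imp2: D2 => D2. exact: Lb.
    + apply: d_Rimp. move/invR_imp: D => D.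
      have D2 : der (a :: Γ) (Imp a b :: b :: Δ) by pto (a :: Γ) (b :: Imp a b :: Δ).
      move/invR_imp: D2 => D2. apply: Rb. exact: La.
  - split => Γ Δ D.
    + apply: d_Lneg. move/invL_neg: D => D. move/invL_neg: D => D. exact: Ra.
    + apply: d_Rneg. move/invR_neg: D => D. move/invR_neg: D => D. exact: La.
  - split => Γ Δ D; [apply: (ctrL_atom _ _ D (Permutation_refl _)) => // ? ? [_ <-]; exact: Lg | exact: (ctrR_atom _ D (Permutation_refl _))].
Qed.

Lemma ctrLs X Γ Δ : der (X ++ X ++ Γ) Δ -> der (X ++ Γ) Δ.
Proof.
  elim: X Γ => //= x X IH Γ D.
  have D1 : der (x :: x :: X ++ X ++ Γ) Δ by pto (x :: X ++ x :: X ++ Γ) Δ.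
  move: (proj1 (ctr x) _ _ D1) => D2.
  have D3 : der (X ++ X ++ x :: Γ) Δ by pto (x :: X ++ X ++ Γ) Δ.
  move: (IH _ D3) => D4. by pto (X ++ x :: Γ) Δ.
Qed.

Lemma ctrRs X Γ Δ : der Γ (X ++ X ++ Δ) -> der Γ (X ++ Δ).
Proof.
  elim: X Δ => //= x X IH Δ D.
  have D1 : der Γ (x :: x :: X ++ X ++ Δ) by pto Γ (x :: X ++ x :: X ++ Δ).
  move: (proj2 (ctr x) _ _ D1) => D2.
  have D3 : der Γ (X ++ X ++ x :: Δ) by pto Γ (x :: X ++ X ++ Δ).
  move: (IH _ D3) => D4. by pto Γ (X ++ x :: Δ).
Qed.


Lemma in_perm_g (T : Type) (x : T) (l : list T) : In x l -> exists k : list T, Permutation l (x :: k).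
Proof.
  elim: l => //= y l IH [->|H]; first by exists l.
  case: (IH H) => k Hk. exists (y :: k).
  exact: (Permutation_trans (perm_skip y Hk) (perm_swap x y k)).
Qed.

Lemma t_absorb (l : list (grp Agt * form)) X Y : L = LKT ->
  der (map snd l ++ map Dp l ++ X) Y -> der (map Dp l ++ X) Y.
Proof.
  move=> HL. elim: l X => //= [[H g] l] IH X D /=.
  have D1 : der (Dbox H g :: g :: map snd l ++ map Dp l ++ X) Y.
  { by pto (g :: map snd l ++ Dbox H g :: map Dp l ++ X) Y. }
  move: (d_DT HL D1) => D2.
  have D3 : der (map snd l ++ map Dp l ++ Dbox H g :: X) Y by pto (Dbox H g :: map snd l ++ map Dp l ++ X) Y.
  move: (IH _ D3) => D4. by pto (map Dp l ++ Dbox H g :: X) Y.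
Qed.

Lemma grp_single (Gi Ga : grp Agt) a : val Gi \subset val Ga -> val Ga = [set a] -> Gi = Ga.
Proof.
  move=> Hs Ha. apply: val_inj. rewrite Ha. rewrite Ha subset1 in Hs.
  case/orP: Hs => /eqP // E. by move: (valP Gi); rewrite E eqxx.
Qed.

Lemma map_Dp_eq (l : list (grp Agt * form)) Ga : (forall x, In x l -> x.1 = Ga) ->
  map Dp l = map (Dbox Ga) (map snd l).
Proof.
  elim: l => //= x l IH H. rewrite (H x (or_introl erefl)) IH //. move=> y Hy; apply: H; by right.
Qed.

Definition cutP λ := forall Γ Δ Γ' Δ', der Γ (λ :: Δ) -> der (λ :: Γ') Δ' -> der (Γ ++ Γ') (Δ ++ Δ').

Lemma box_pr G b (l : list (grp Agt * form)) Σ Ω : cutP b -> der (map snd l) [:: b] ->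
  (forall Ha, In Ha l -> val Ha.1 \subset val G) -> (forall f, In f Σ -> sigmaK G f) ->
  (forall f, In f Ω -> omegaOK f) ->
  forall Γ2 Δ2, der Γ2 Δ2 -> forall Γ', Permutation Γ2 (Dbox G b :: Γ') ->
  der ((Σ ++ map Dp l) ++ Γ') (Ω ++ Δ2).
Proof.
  move=> Cb Hp Hl HΣ HΩ Γ2 Δ2 D; elim: D => {Γ2 Δ2}.
  - move=> Γ Δ Γ1 Δ1 h1 h2 _ IH Γ' HP.
    move: (IH Γ' (Permutation_trans h1 HP)) => D. by pto ((Σ ++ map Dp l) ++ Γ') (Ω ++ Δ).
  - move=> p Γ Δ Γ' HP. apply: (init_gen (p := p)); apply/In_cat; right; last by left.
    by apply: inA HP _.
  - move=> Γ Δ Γ' HP. apply: bot_gen; apply/In_cat; right. by apply: inA HP _.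
  - move=> Γ Δ a1 a2 _ IH1 _ IH2 Γ' HP. move: (IH1 _ HP) (IH2 _ HP) => D1 D2.
    pto ((Σ ++ map Dp l) ++ Γ') (And a1 a2 :: Ω ++ Δ); apply d_Rand;
      [by pto ((Σ ++ map Dp l) ++ Γ') (Ω ++ a1 :: Δ) | by pto ((Σ ++ map Dp l) ++ Γ') (Ω ++ a2 :: Δ)].
  - move=> Γ Δ a1 a2 _ IH Γ' HP. case: (perm_cons_cons HP) => [[E _]|[NE [m [Hm1 Hm2]]]] //.
    move: (IH (a1 :: a2 :: m) ltac:(psolve)) => D1.
    pto (And a1 a2 :: (Σ ++ map Dp l) ++ m) (Ω ++ Δ); apply d_Land; by pto ((Σ ++ map Dp l) ++ a1 :: a2 :: m) (Ω ++ Δ).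
  - move=> Γ Δ a1 a2 _ IH Γ' HP. move: (IH _ HP) => D1.
    pto ((Σ ++ map Dp l) ++ Γ') (Or a1 a2 :: Ω ++ Δ); apply d_Ror; by pto ((Σ ++ map Dp l) ++ Γ') (Ω ++ a1 :: a2 :: Δ).
  - move=> Γ Δ a1 a2 _ IH1 _ IH2 Γ' HP. case: (perm_cons_cons HP) => [[E _]|[NE [m [Hm1 Hm2]]]] //.
    move: (IH1 (a1 :: m) ltac:(psolve)) (IH2 (a2 :: m) ltac:(psolve)) => D1 D2.
    pto (Or a1 a2 :: (Σ ++ map Dp l) ++ m) (Ω ++ Δ); apply d_Lor;
      [by pto ((Σ ++ map Dp l) ++ a1 :: m) (Ω ++ Δ) | by pto ((Σ ++ map Dp l) ++ a2 :: m) (Ω ++ Δ)].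
  - move=> Γ Δ a1 a2 _ IH Γ' HP. move: (IH (a1 :: Γ') ltac:(psolve)) => D1.
    pto ((Σ ++ map Dp l) ++ Γ') (Imp a1 a2 :: Ω ++ Δ); apply d_Rimp; by pto ((Σ ++ map Dp l) ++ a1 :: Γ') (Ω ++ a2 :: Δ).
  - move=> Γ Δ a1 a2 _ IH1 _ IH2 Γ' HP. case: (perm_cons_cons HP) => [[E _]|[NE [m [Hm1 Hm2]]]] //.
    move: (IH1 m Hm1) (IH2 (a2 :: m) ltac:(psolve)) => D1 D2.
    pto (Imp a1 a2 :: (Σ ++ map Dp l) ++ m) (Ω ++ Δ); apply d_Limp;
      [by pto ((Σ ++ map Dp l) ++ m) (Ω ++ a1 :: Δ) | by pto ((Σ ++ map Dp l) ++ a2 :: m) (Ω ++ Δ)].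
  - move=> Γ Δ a _ IH Γ' HP. move: (IH (a :: Γ') ltac:(psolve)) => D1.
    pto ((Σ ++ map Dp l) ++ Γ') (Neg a :: Ω ++ Δ); apply d_Rneg; by pto ((Σ ++ map Dp l) ++ a :: Γ') (Ω ++ Δ).
  - move=> Γ Δ a _ IH Γ' HP. case: (perm_cons_cons HP) => [[E _]|[NE [m [Hm1 Hm2]]]] //.
    move: (IH m Hm1) => D1.
    pto (Neg a :: (Σ ++ map Dp l) ++ m) (Ω ++ Δ); apply d_Lneg; by pto ((Σ ++ map Dp l) ++ m) (Ω ++ a :: Δ).
  - move=> l' H d Σ' Ω' Hp' _ Hl' HΣ' HΩ' Γ' HP.
    case/In_cat: (HPin HP) => Hin.
    + case: (in_perm Hin) => Σ0 HΣ0.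
      have HD : der (Σ0 ++ map Dp l') (Dbox H d :: Ω').
      { apply d_DK; try done. move=> f Hf; apply: HΣ'. apply: (perm_In (Permutation_sym HΣ0)). by right. }
      by wto (Σ0 ++ map Dp l') (Dbox H d :: Ω').
    + case/in_map_iff: Hin => [[G1 b1] [[E1 E2] Hin]]. subst G1 b1.
      case: (in_perm_g Hin) => l0 Hl0.
      have Hm := Permutation_map Dp Hl0.
      have Hs := Permutation_map snd Hl0.
      have Hp2 : der (b :: map snd l0) [:: d] by apply: (dP Hs _ Hp').
      move: (Cb _ _ _ _ Hp Hp2) => /= Hp3. rewrite -lmap_cat in Hp3.
      have GH : val G \subset val H by exact: (Hl' (G, b) Hin).
      have HD : der (Σ' ++ map Dp (l ++ l0)) (Dbox H d :: Ω').
      { apply d_DK; try done. move=> Ha /In_cat [Ha1|Ha2].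
        - apply: subset_trans GH. exact: Hl.
        - apply: Hl'. apply: (Permutation_in _ (Permutation_sym Hl0)). by right. }
      by wto (Σ' ++ map Dp (l ++ l0)) (Dbox H d :: Ω').
  - move=> a Ga Γd Σ' Ω' HL Ha Hne Hp' _ HΣ' HΩ' Γ' HP.
    case/In_cat: (HPin HP) => Hin.
    + case: (in_perm Hin) => Σ0 HΣ0.
      have HD : der (Σ0 ++ map (Dbox Ga) Γd) Ω'.
      { apply (d_DD (a:=a)); try done. move=> f Hf; apply: HΣ'. apply: (perm_In (Permutation_sym HΣ0)). by right. }
      by wto (Σ0 ++ map (Dbox Ga) Γd) Ω'.
    + case/in_map_iff: Hin => [y [[E1 E2] Hin]]. subst Ga y.
      case: (in_perm Hin) => Γd0 HΓd0.
      have Hm := Permutation_map (Dbox G) HΓd0.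
      have Hp2 : der (b :: Γd0) [::] by apply: (dP HΓd0 _ Hp').
      move: (Cb _ _ _ _ Hp Hp2) => /= Hp3.
      have Emap : map Dp l = map (Dbox G) (map snd l).
      { apply: map_Dp_eq => x Hx. exact: (grp_single (Hl x Hx) Ha). }
      case E0: (map snd l ++ Γd0) => [|y ys].
      * rewrite E0 in Hp3. apply: (wk_le Hp3); move=> x; rewrite /=; lia.
      * have HD : der (Σ' ++ map (Dbox G) (map snd l ++ Γd0)) Ω'.
        { apply (d_DD (a:=a)); try done. by rewrite E0. }
        apply: (wk_le HD); rewrite ?Emap; csolve.
  - move=> G' a Γ Δ HL _ IH Γ' HP. case: (perm_cons_cons HP) => [[E HP']|[NE [m [Hm1 Hm2]]]].
    + case: E => E1 E2; subst G' a.
      move: (IH (b :: Γ') ltac:(psolve)) => D1.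
      have D1' : der (b :: (Σ ++ map Dp l ++ Γ')) (Ω ++ Δ) by pto ((Σ ++ map Dp l) ++ b :: Γ') (Ω ++ Δ).
      move: (Cb _ _ _ _ Hp D1') => D3.
      have D4 : der (map snd l ++ map Dp l ++ (Σ ++ Γ')) (Ω ++ Δ)
        by pto (map snd l ++ Σ ++ map Dp l ++ Γ') ([::] ++ (Ω ++ Δ)).
      move: (t_absorb HL D4) => D5. by pto (map Dp l ++ Σ ++ Γ') (Ω ++ Δ).
    + move: (IH (Dbox G' a :: a :: m) ltac:(psolve)) => D1.
      pto (Dbox G' a :: (Σ ++ map Dp l) ++ m) (Ω ++ Δ); apply d_DT => //;
        by pto ((Σ ++ map Dp l) ++ Dbox G' a :: a :: m) (Ω ++ Δ).
Qed.


Lemma cut_atom λ : omegaOK λ -> (forall G b, λ = Dbox G b -> cutP b) ->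
  forall Γ' Δ', der (λ :: Γ') Δ' ->
  forall Γ Δ0, der Γ Δ0 -> forall Δ, Permutation Δ0 (λ :: Δ) -> der (Γ ++ Γ') (Δ ++ Δ').
Proof.
  move=> Hλ IHb Γ' Δ' Hr Γ Δ0 D; elim: D => {Γ Δ0}.
  - move=> Γ Δ Γ1 Δ1 h1 h2 _ IH Δ0 HP.
    move: (IH Δ0 (Permutation_trans h2 HP)) => D. by pto (Γ ++ Γ') (Δ0 ++ Δ').
  - move=> p Γ Δ Δ0 HP. case: (perm_cons_cons HP) => [[E HP']|[NE [m [Hm1 Hm2]]]].
    + rewrite -E in Hr. by wto (Var p :: Γ') Δ'.
    + apply: (init_gen (p := p)); first by left.
      apply/In_cat; left. apply: (perm_In (Permutation_sym Hm2)). by left.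
  - move=> Γ Δ Δ0 HP. apply: bot_gen. by left.
  - move=> Γ Δ a1 a2 _ IH1 _ IH2 Δ0 HP. case: (perm_cons_cons HP) => [[E _]|[NE [m [Hm1 Hm2]]]]; first by rewrite -E in Hλ.
    move: (IH1 (a1 :: m) ltac:(psolve)) (IH2 (a2 :: m) ltac:(psolve)) => D1 D2.
    pto (Γ ++ Γ') (And a1 a2 :: m ++ Δ'); apply d_Rand; [by pto (Γ ++ Γ') ((a1 :: m) ++ Δ') | by pto (Γ ++ Γ') ((a2 :: m) ++ Δ')].
  - move=> Γ Δ a1 a2 _ IH Δ0 HP. move: (IH _ HP) => D1.
    pto (And a1 a2 :: Γ ++ Γ') (Δ0 ++ Δ'); apply d_Land; by pto ((a1 :: a2 :: Γ) ++ Γ') (Δ0 ++ Δ').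
  - move=> Γ Δ a1 a2 _ IH Δ0 HP. case: (perm_cons_cons HP) => [[E _]|[NE [m [Hm1 Hm2]]]]; first by rewrite -E in Hλ.
    move: (IH (a1 :: a2 :: m) ltac:(psolve)) => D1.
    pto (Γ ++ Γ') (Or a1 a2 :: m ++ Δ'); apply d_Ror; by pto (Γ ++ Γ') ((a1 :: a2 :: m) ++ Δ').
  - move=> Γ Δ a1 a2 _ IH1 _ IH2 Δ0 HP. move: (IH1 _ HP) (IH2 _ HP) => D1 D2.
    pto (Or a1 a2 :: Γ ++ Γ') (Δ0 ++ Δ'); apply d_Lor; [by pto ((a1 :: Γ) ++ Γ') (Δ0 ++ Δ') | by pto ((a2 :: Γ) ++ Γ') (Δ0 ++ Δ')].
  - move=> Γ Δ a1 a2 _ IH Δ0 HP. case: (perm_cons_cons HP) => [[E _]|[NE [m [Hm1 Hm2]]]]; first by rewrite -E in Hλ.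
    move: (IH (a2 :: m) ltac:(psolve)) => D1.
    pto (Γ ++ Γ') (Imp a1 a2 :: m ++ Δ'); apply d_Rimp; by pto ((a1 :: Γ) ++ Γ') ((a2 :: m) ++ Δ').
  - move=> Γ Δ a1 a2 _ IH1 _ IH2 Δ0 HP. move: (IH1 (a1 :: Δ0) ltac:(psolve)) (IH2 _ HP) => D1 D2.
    pto (Imp a1 a2 :: Γ ++ Γ') (Δ0 ++ Δ'); apply d_Limp; [by pto (Γ ++ Γ') ((a1 :: Δ0) ++ Δ') | by pto ((a2 :: Γ) ++ Γ') (Δ0 ++ Δ')].
  - move=> Γ Δ a _ IH Δ0 HP. case: (perm_cons_cons HP) => [[E _]|[NE [m [Hm1 Hm2]]]]; first by rewrite -E in Hλ.
    move: (IH m Hm1) => D1.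
    pto (Γ ++ Γ') (Neg a :: m ++ Δ'); apply d_Rneg; by pto ((a :: Γ) ++ Γ') (m ++ Δ').
  - move=> Γ Δ a _ IH Δ0 HP. move: (IH (a :: Δ0) ltac:(psolve)) => D1.
    pto (Neg a :: Γ ++ Γ') (Δ0 ++ Δ'); apply d_Lneg; by pto (Γ ++ Γ') ((a :: Δ0) ++ Δ').
  - move=> l G b Σ Ω Hp _ Hl HΣ HΩ Δ0 HP. case: (perm_cons_cons HP) => [[E HP']|[NE [m [Hm1 Hm2]]]].
    + rewrite -E in Hr IHb.
      move: (box_pr (IHb G b erefl) Hp Hl HΣ HΩ Hr (Permutation_refl _)) => D1.
      by pto ((Σ ++ map Dp l) ++ Γ') (Ω ++ Δ').
    + have HD : der (Σ ++ map Dp l) (Dbox G b :: m).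
      { apply d_DK; try done. move=> f Hf; apply: HΩ. apply: (perm_In (Permutation_sym Hm1)). by right. }
      by wto (Σ ++ map Dp l) (Dbox G b :: m).
  - move=> a Ga Γd Σ Ω HL Ha Hne Hp _ HΣ HΩ Δ0 HP.
    have HD : der (Σ ++ map (Dbox Ga) Γd) Δ0.
    { apply (d_DD (a:=a)); try done. move=> f Hf; apply: HΩ. apply: (perm_In (Permutation_sym HP)). by right. }
    by wto (Σ ++ map (Dbox Ga) Γd) Δ0.
  - move=> G a Γ Δ HL _ IH Δ0 HP. move: (IH _ HP) => D1.
    pto (Dbox G a :: Γ ++ Γ') (Δ0 ++ Δ'); apply d_DT => //; by pto ((Dbox G a :: a :: Γ) ++ Γ') (Δ0 ++ Δ').
Qed.

Lemma cut λ : cutP λ.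
Proof.
  elim: λ => [p| |a IHa b IHb|a IHa b IHb|a IHa b IHb|a IHa|H g IHg] Γ Δ Γ' Δ' D1 D2.
  - have IH : forall G b, Var p = Dbox G b -> cutP b by move=> ? ? [].
    exact: (cut_atom (λ := Var p) I IH D2 D1 (Permutation_refl _)).
  - have IH : forall G b, Bot = Dbox G b -> cutP b by move=> ? ? [].
    exact: (cut_atom (λ := Bot) I IH D2 D1 (Permutation_refl _)).
  - move: (invR_and1 D1) (invR_and2 D1) (invL_and D2) => E1 E2 F.
    move: (IHa _ _ _ _ E1 F) => G1.
    have G1' : der (b :: Γ ++ Γ') (Δ ++ Δ') by pto (Γ ++ b :: Γ') (Δ ++ Δ').
    move: (IHb _ _ _ _ E2 G1') => G2.
    apply: ctrLs; apply: ctrRs; exact: G2.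
  - move: (invR_or D1) (invL_or1 D2) (invL_or2 D2) => E F1 F2.
    move: (IHa _ _ _ _ E F1) => G1.
    have G1' : der (Γ ++ Γ') (b :: Δ ++ Δ') by pto (Γ ++ Γ') ((b :: Δ) ++ Δ').
    move: (IHb _ _ _ _ G1' F2) => G2.
    pto (Γ' ++ Γ) (Δ' ++ Δ); apply: ctrLs; apply: ctrRs; by pto ((Γ ++ Γ') ++ Γ') ((Δ ++ Δ') ++ Δ').
  - move: (invR_imp D1) (invL_imp1 D2) (invL_imp2 D2) => E F1 F2.
    move: (IHa _ _ _ _ F1 E) => G1.
    have G1' : der (Γ' ++ Γ) (b :: Δ' ++ Δ) by pto (Γ' ++ Γ) (Δ' ++ b :: Δ).
    move: (IHb _ _ _ _ G1' F2) => G2.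
    pto (Γ' ++ Γ) (Δ' ++ Δ); apply: ctrLs; apply: ctrRs; by pto ((Γ' ++ Γ) ++ Γ') ((Δ' ++ Δ) ++ Δ').
  - move: (invR_neg D1) (invL_neg D2) => E F.
    move: (IHa _ _ _ _ F E) => G1. by pto (Γ' ++ Γ) (Δ' ++ Δ).
  - have IH : forall G b, Dbox H g = Dbox G b -> cutP b by move=> ? ? [_ <-].
    exact: (cut_atom (λ := Dbox H g) I IH D2 D1 (Permutation_refl _)).
Qed.

Lemma cut_main (Γ Δ Γ' Δ' : list form) λ : der Γ (Δ ++ [:: λ]) -> der (λ :: Γ') Δ' -> der (Γ ++ Γ') (Δ ++ Δ').
Proof.
  move=> D1 D2. have D1' : der Γ (λ :: Δ) by pto Γ (Δ ++ [:: λ]).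
  exact: (cut D1' D2).
Qed.

End Cut.

Local Close Scope seq_scope.

Theorem proposition3p11 (V : countType) (Agt : finType) (hAgt : 0 < #|Agt|)
  (L : logic) (Γ Δ Γ' Δ' : list (form V Agt)) (λ : form V Agt) :
  derivable L Γ (Δ ++ [:: λ]) ->
  derivable L (λ :: Γ') Δ' ->
  derivable L (Γ ++ Γ') (Δ ++ Δ').
Proof. exact: cut_main. Qed.
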